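(* Let $(X,d)$ be a metric space and let $u,u_1,u_2,\ldots\in F_{USC}(X)$. Then: (i) $H_{\rm send}(u_n,u)\to0$ if and only if $H_{\rm end}(u_n,u)\to0$ and $H([u_n]_0,[u]_0)\to0$; (ii) ${\rm send}\,u_n$ Kuratowski converges to ${\rm send}\,u$ if and only if $u_n\stackrel{\Gamma}{\longrightarrow}u$ and $[u_n]_0$ Kuratowski converges to $[u]_0$.
   Context: A fuzzy set on $X$ is a function $u:X\to[0,1]$, with $\alpha$-cuts $[u]_\alpha=\{x: u(x)\ge\alpha\}$ for $\alpha\in(0,1]$ and $[u]_0=\overline{\{u>0\}}$. $F_{USC}(X)$ is the set of fuzzy sets with all $\alpha$-cuts ($\alpha\in[0,1]$) non-empty and closed. $X\times[0,1]$ is metrized by $\overline{d}((x,\alpha),(y,\beta))=d(x,y)+|\alpha-\beta|$. For non-empty closed sets $U,V$ in a metric space, $H(U,V)=\max\{\sup_{a\in U}\inf_{b\in V}\rho(a,b),\sup_{b\in V}\inf_{a\in U}\rho(a,b)\}$ is the Hausdorff distance ($\rho=d$ on $X$, $\rho=\overline{d}$ on $X\times[0,1]$). ${\rm end}\,u=\{(x,t)\in X\times[0,1]: u(x)\ge t\}$, ${\rm send}\,u={\rm end}\,u\cap([u]_0\times[0,1])$, $H_{\rm end}(u,v)=H({\rm end}\,u,{\rm end}\,v)$, $H_{\rm send}(u,v)=H({\rm send}\,u,{\rm send}\,v)$. For sets $C_n$: $\liminf_n C_n=\{x: x=\lim_n x_n, x_n\in C_n\}$, $\limsup_n C_n=\{x: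 x=\lim_j x_{n_j}, x_{n_j}\in C_{n_j}\}$; $C_n$ Kuratowski converges to $C$ if $C=\liminf_n C_n=\limsup_n C_n$. $u_n\stackrel{\Gamma}{\longrightarrow}u$ means ${\rm end}\,u_n$ Kuratowski converges to ${\rm end}\,u$. *)

(* Defs.v *)
From HB Require Import structures.
From mathcomp Require Import all_boot all_order all_algebra.
From mathcomp Require Import all_classical all_reals all_analysis.
Set Implicit Arguments. Unset Strict Implicit. Unset Printing Implicit Defensive.
Import Order.TTheory GRing.Theory Num.Theory.
Local Open Scope classical_set_scope.
Local Open Scope ring_scope.

Section Defs.
Variable R : realType.

Definition is_metric (X : Type) (d : X -> X -> R) : Prop :=
  [/\ forall x y, d x y = 0 <-> x = y,
      forall x y, d x y = d y x &
      forall x y z, d x z <= d x y + d y z].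

Definition mclosure (T : Type) (rho : T -> T -> R) (A : set T) : set T :=
  [set x | forall e : R, 0 < e -> exists2 y, A y & rho x y < e].

Definition mclosed (T : Type) (rho : T -> T -> R) (A : set T) : Prop :=
  mclosure rho A `<=` A.

Definition cut (X : Type) (u : X -> R) (a : R) : set X := [set x | a <= u x].
Definition cut0 (X : Type) (d : X -> X -> R) (u : X -> R) : set X :=
  mclosure d [set x | 0 < u x].

Definition FUSC (X : Type) (d : X -> X -> R) (u : X -> R) : Prop :=
  [/\ forall x, 0 <= u x <= 1,
      cut0 d u !=set0, mclosed d (cut0 d u) &
      forall a, 0 < a <= 1 -> cut u a !=set0 /\ mclosed d (cut u a)].

(* metric dbar on X * [0,1] (represented in X * R) *)
Definition dbar (X : Type) (d : X -> X -> R) (p q : X * R) : R :=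
  d p.1 q.1 + `|p.2 - q.2|.

Definition endo (X : Type) (u : X -> R) : set (X * R) :=
  [set p | 0 <= p.2 <= 1 /\ p.2 <= u p.1].

Definition sendo (X : Type) (d : X -> X -> R) (u : X -> R) : set (X * R) :=
  endo u `&` [set p | cut0 d u p.1 /\ 0 <= p.2 <= 1].

Definition hexcess (T : Type) (rho : T -> T -> R) (U V : set T) : \bar R :=
  ereal_sup [set ereal_inf [set (rho a b)%:E | b in V] | a in U].

Definition hausdorff (T : Type) (rho : T -> T -> R) (U V : set T) : \bar R :=
  Order.max (hexcess rho U V) (hexcess rho V U).

Definition mcvg (T : Type) (rho : T -> T -> R) (x : nat -> T) (l : T) : Prop :=
  forall e : R, 0 < e -> exists N : nat, forall n, (N <= n)%N -> rho (x n) l < e.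

Definition kliminf (T : Type) (rho : T -> T -> R) (C : nat -> set T) : set T :=
  [set l | exists x : nat -> T, (forall n, C n (x n)) /\ mcvg rho x l].

Definition klimsup (T : Type) (rho : T -> T -> R) (C : nat -> set T) : set T :=
  [set l | exists (phi : nat -> nat) (x : nat -> T),
     (forall j, (phi j < phi j.+1)%N) /\ (forall j, C (phi j) (x j)) /\ mcvg rho x l].

Definition kuratowski (T : Type) (rho : T -> T -> R) (C : nat -> set T) (A : set T) : Prop :=
  A = kliminf rho C /\ A = klimsup rho C.

End Defs.

(* Main.v *)
Require Import Defs.
From HB Require Import structures.
From mathcomp Require Import all_boot all_order all_algebra.
From mathcomp Require Import all_classical all_reals all_analysis.
From mathcomp Require Import lra.
Import Order.TTheory GRing.Theory Num.Theory.
Set Implicit Arguments. Unset Strict Implicit. Unset Printing Implicit Defensive.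
Local Open Scope classical_set_scope.
Local Open Scope ring_scope.

Section Gen.
Variable R : realType.

Lemma cvg0E (f : nat -> \bar R) : (forall n, (0 <= f n)%E) ->
  (f @ \oo --> 0%:E <-> forall e : R, 0 < e -> \forall n \near \oo, (f n <= e%:E)%E).
Proof.
move=> f0; split.
- move=> /fine_cvgP [fin cf] e e0.
  move: cf => /cvgrPdist_le /(_ e e0).
  apply: filterS2 fin => n fn /=.
  rewrite sub0r normrN.
  case: (f n) fn => [r| |] //= _; rewrite lee_fin => h.
  exact: le_trans (ler_norm r) h.
- move=> H; apply/fine_cvgP; split.
  + have := H 1 ltr01; apply: filterS => n hn.
    rewrite ge0_fin_numE //; exact: le_lt_trans hn (ltry _).
  + apply/cvgrPdist_le => e e0; have := H e e0; apply: filterS => n.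
    rewrite sub0r normrN /=.
    case: (f n) (f0 n) => [r| |] //=;
    by rewrite !lee_fin => r0 re; rewrite ger0_norm.
Qed.

Lemma hexcess_le T (rho : T -> T -> R) U V e :
  (forall a, U a -> exists2 b, V b & rho a b < e) -> (hexcess rho U V <= e%:E)%E.
Proof.
move=> H; apply: ge_ereal_sup => _ [a Ua <-].
have [b Vb lt] := H a Ua.
apply: (@le_trans _ _ (rho a b)%:E); last by rewrite lee_fin ltW.
by apply: ereal_inf_lbound; exists b.
Qed.

Lemma hexcess_lt T (rho : T -> T -> R) U V e a :
  (hexcess rho U V < e%:E)%E -> U a -> exists2 b, V b & rho a b < e.
Proof.
move=> H Ua.
have : (ereal_inf [set (rho a b)%:E | b in V] < e%:E)%E.
  by apply: le_lt_trans H; apply: ereal_sup_ubound; exists a.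
by move/ereal_inf_lt => [_ [b Vb <-]]; rewrite lte_fin; exists b.
Qed.

Lemma hexcess_ge0 T (rho : T -> T -> R) U V a :
  (forall x y, 0 <= rho x y) -> U a -> (0 <= hexcess rho U V)%E.
Proof.
move=> r0 Ua; apply: le_trans (ereal_sup_ubound _); last by exists a.
by apply: le_ereal_inf_tmp => _ [b _ <-]; rewrite lee_fin.
Qed.

Lemma haus_ge0 T (rho : T -> T -> R) U V a :
  (forall x y, 0 <= rho x y) -> U a -> (0 <= hausdorff rho U V)%E.
Proof. by move=> r0 Ua; rewrite /hausdorff le_max (@hexcess_ge0 _ _ U V a r0 Ua). Qed.

Lemma haus_le T (rho : T -> T -> R) U V e :
  (hexcess rho U V <= e)%E -> (hexcess rho V U <= e)%E -> (hausdorff rho U V <= e)%E.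
Proof. by move=> h1 h2; rewrite /hausdorff ge_max h1 h2. Qed.

Lemma haus_lt T (rho : T -> T -> R) U V e :
  (hausdorff rho U V < e)%E -> (hexcess rho U V < e)%E /\ (hexcess rho V U < e)%E.
Proof. by rewrite /hausdorff gt_max => /andP. Qed.

Lemma liminf_sub_limsup T (rho : T -> T -> R) C : kliminf rho C `<=` klimsup rho C.
Proof. by move=> l [x [Cx cx]]; exists id, x; split. Qed.

Lemma kur_iff T (rho : T -> T -> R) C A :
  kuratowski rho C A <-> (klimsup rho C `<=` A /\ A `<=` kliminf rho C).
Proof.
split.
- by move=> [e1 e2]; split; [rewrite -e2 | rewrite -e1].
- move=> [h1 h2]; split; apply/seteqP; split => //.
  + exact: subset_trans (@liminf_sub_limsup _ _ _) h1.
  + exact: subset_trans h2 (@liminf_sub_limsup _ _ _).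
Qed.

Lemma klimsup_shift T (rho : T -> T -> R) (C : nat -> set T) (phi : nat -> nat)
  (x : nat -> T) l N : (forall j, (phi j < phi j.+1)%N) ->
  (forall j, (N <= j)%N -> C (phi j) (x j)) -> mcvg rho x l -> klimsup rho C l.
Proof.
move=> hphi hC hx.
exists (fun j => phi (j + N)%N), (fun j => x (j + N)%N); split; [|split].
- by move=> j /=; rewrite addSn; exact: hphi.
- by move=> j; apply: hC; rewrite leq_addl.
- move=> e e0; have [M hM] := hx e e0; exists M => n hn; apply: hM.
  by rewrite (leq_trans hn) ?leq_addr.
Qed.

Lemma liminf_mono T (rho : T -> T -> R) (C C' : nat -> set T) :
  (forall n, C n `<=` C' n) -> kliminf rho C `<=` kliminf rho C'.
Proof. by move=> h l [x [Cx cx]]; exists x; split => // n; apply: h. Qed.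

Lemma lim_ge (a : nat -> R) t c :
  (forall e, 0 < e -> exists N, forall n, (N <= n)%N -> `|a n - t| < e) ->
  (forall n, c <= a n) -> c <= t.
Proof.
move=> H hc; rewrite leNgt; apply/negP => tc.
have [N hN] := H (c - t) (ltac:(by rewrite subr_gt0)).
move: (hN N (leqnn N)) (hc N); rewrite ltr_norml => /andP [h1 h2] h3; lra.
Qed.

Lemma lim_le (a : nat -> R) t c :
  (forall e, 0 < e -> exists N, forall n, (N <= n)%N -> `|a n - t| < e) ->
  (forall n, a n <= c) -> t <= c.
Proof.
move=> H hc; rewrite leNgt; apply/negP => tc.
have [N hN] := H (t - c) (ltac:(by rewrite subr_gt0)).
move: (hN N (leqnn N)) (hc N); rewrite ltr_norml => /andP [h1 h2] h3; lra.
Qed.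

End Gen.
Section Met.
Variables (R : realType) (X : Type) (d : X -> X -> R).
Hypothesis md : is_metric d.

Lemma d0 x : d x x = 0.
Proof. by case: md => h _ _; apply/h. Qed.

Lemma d_ge0 x y : 0 <= d x y.
Proof. have [_ s t] := md; have := t x y x; rewrite d0 (s y x); lra. Qed.

Lemma dbar_ge0 p q : 0 <= dbar d p q.
Proof. by rewrite /dbar addr_ge0 ?d_ge0. Qed.

Lemma pos_cut0 (v : X -> R) x : 0 < v x -> cut0 d v x.
Proof. by move=> h e e0; exists x => //; rewrite d0. Qed.

Lemma mcvg_fst (p : nat -> X * R) l : mcvg (dbar d) p l -> mcvg d (fun n => (p n).1) l.1.
Proof.
move=> h e e0; have [N hN] := h e e0; exists N => n /hN.
by apply: le_lt_trans; rewrite /dbar lerDl.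
Qed.

Lemma mcvg_snd (p : nat -> X * R) l : mcvg (dbar d) p l ->
  forall e, 0 < e -> exists N, forall n, (N <= n)%N -> `|(p n).2 - l.2| < e.
Proof.
move=> h e e0; have [N hN] := h e e0; exists N => n /hN.
by apply: le_lt_trans; rewrite /dbar lerDr d_ge0.
Qed.

Lemma mcvg_pair0 (x : nat -> X) y : mcvg d x y -> mcvg (dbar d) (fun n => (x n, 0)) (y, 0).
Proof.
move=> h e e0; have [N hN] := h e e0; exists N => n /hN.
by rewrite /dbar /= subrr normr0 addr0.
Qed.

Lemma exc_end (v u : X -> R) e : 0 < e -> (forall x, 0 <= u x) ->
  (hexcess (dbar d) (sendo d v) (sendo d u) < e%:E)%E ->
  (hexcess (dbar d) (endo v) (endo u) <= e%:E)%E.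
Proof.
move=> e0 u0 h; apply: hexcess_le => -[x t] [/= /andP [t0 t1] tv].
move: t0; rewrite le_eqVlt => /orP [/eqP t0|tpos].
- subst t; exists (x, 0); first by split => //=; rewrite ?lexx ?ler01 ?u0.
  by rewrite /dbar /= d0 subrr normr0 addr0.
- have sv : sendo d v (x, t).
    split; first by split => //=; rewrite (ltW tpos) t1.
    by split => /=; [apply: pos_cut0; exact: lt_le_trans tv|rewrite (ltW tpos) t1].
  by have [q [sq _] lt] := hexcess_lt h sv; exists q.
Qed.

Lemma exc_cut0 (v u : X -> R) e : (forall x, 0 <= v x) ->
  (hexcess (dbar d) (sendo d v) (sendo d u) < e%:E)%E ->
  (hexcess d (cut0 d v) (cut0 d u) <= e%:E)%E.
Proof.
move=> v0 h; apply: hexcess_le => x cx.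
have sv : sendo d v (x, 0).
  by split; [split => //=; rewrite ?lexx ?ler01 ?v0 | split => //=; rewrite lexx ler01].
have [[y s] [_ [cy _]] lt] := hexcess_lt h sv.
exists y => //; apply: le_lt_trans lt; by rewrite /dbar /= lerDl.
Qed.

Lemma exc_send (v u : X -> R) e : 0 < e -> (forall x, 0 <= u x) ->
  (hexcess (dbar d) (endo v) (endo u) < e%:E)%E ->
  (hexcess d (cut0 d v) (cut0 d u) < e%:E)%E ->
  (hexcess (dbar d) (sendo d v) (sendo d u) <= (e + e)%:E)%E.
Proof.
move=> e0 u0 h1 h2; apply: hexcess_le => -[x t] [ev [/= cx tb]].
have [[y s] [/= /andP [s0 s1] su] lt] := hexcess_lt h1 ev.
move: s0; rewrite le_eqVlt => /orP [/eqP s0|spos].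
- have [y' cy' lt'] := hexcess_lt h2 cx.
  exists (y', 0).
    by split; [split => //=; rewrite ?lexx ?ler01 ?u0 | split => //=; rewrite lexx ler01].
  rewrite /dbar /=; apply: ltrD lt' _.
  move: lt; rewrite /dbar /= -s0 => lt; apply: le_lt_trans lt; by rewrite lerDr d_ge0.
- exists (y, s).
    split; first by split => //=; rewrite (ltW spos) s1.
    by split => /=; [apply: pos_cut0; exact: lt_le_trans su|rewrite (ltW spos) s1].
  by apply: lt_trans lt _; rewrite ltrDl.
Qed.

Lemma tpos_of (p : X * R) t : `|p.2 - t| < t -> 0 < p.2.
Proof. by rewrite ltr_norml => /andP [h1 h2]; lra. Qed.

Variables (u : X -> R) (us : nat -> X -> R).
Hypothesis u0 : forall x, 0 <= u x.
Hypothesis us0 : forall n x, 0 <= us n x.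

Let Send := fun n => sendo d (us n).
Let End := fun n => endo (us n).
Let Cut := fun n => cut0 d (us n).

Lemma F1 : klimsup (dbar d) Send `<=` sendo d u ->
  klimsup (dbar d) End `<=` endo u.
Proof.
move=> Hs [x t] [phi [p [hphi [hp hc]]]].
have hs := mcvg_snd hc.
have t0 : 0 <= t by apply: (lim_ge hs) => n; have [/andP[]] := hp n.
have t1 : t <= 1 by apply: (lim_le hs) => n; have [/andP[]] := hp n.
move: t0; rewrite le_eqVlt => /orP [/eqP t0|tpos].
- by subst t; split => //=; rewrite ?lexx ?ler01 ?u0.
- have [N hN] := hs t tpos.
  suff : sendo d u (x, t) by case.
  apply: Hs; apply: (klimsup_shift (N := N) hphi _ hc) => j hj.
  have [/andP [pj0 pj1] pju] := hp j.
  have pos := tpos_of (hN j hj).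
  split; first by split => //; rewrite pj0 pj1.
  by split => //; [apply: pos_cut0; exact: lt_le_trans pju | rewrite pj0 pj1].
Qed.

Lemma F2 : sendo d u `<=` kliminf (dbar d) Send ->
  endo u `<=` kliminf (dbar d) End.
Proof.
move=> Hi [x t] [/= /andP [t0 t1] tu].
move: t0; rewrite le_eqVlt => /orP [/eqP t0|tpos].
- subst t; exists (fun _ => (x, 0)); split.
    by move=> n; split => //=; rewrite ?lexx ?ler01 ?us0.
  by move=> e e0; exists 0%N => n _; rewrite /dbar /= d0 subrr normr0 addr0.
- apply: (liminf_mono (C := Send)); first by move=> n p [].
  apply: Hi; split; first by split => //=; rewrite (ltW tpos) t1.
  by split => /=; [apply: pos_cut0; exact: lt_le_trans tu | rewrite (ltW tpos) t1].
Qed.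

Lemma F3 : klimsup (dbar d) Send `<=` sendo d u ->
  klimsup d Cut `<=` cut0 d u.
Proof.
move=> Hs x [phi [y [hphi [hy hc]]]].
have : sendo d u (x, 0).
  apply: Hs; exists phi, (fun j => (y j, 0)); split => //; split; last exact: mcvg_pair0.
  move=> j; split; first by split => //=; rewrite ?lexx ?ler01 ?us0.
  by split => //=; [exact: hy | rewrite lexx ler01].
by move=> [_ []].
Qed.

Lemma F4 : sendo d u `<=` kliminf (dbar d) Send ->
  cut0 d u `<=` kliminf d Cut.
Proof.
move=> Hi x cx.
have [p [hp hc]] : kliminf (dbar d) Send (x, 0).
  apply: Hi; split; first by split => //=; rewrite ?lexx ?ler01 ?u0.
  by split => //=; rewrite lexx ler01.
exists (fun n => (p n).1); split; last exact: (mcvg_fst hc).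
by move=> n; have [_ []] := hp n.
Qed.

Lemma B1 : klimsup (dbar d) End `<=` endo u -> klimsup d Cut `<=` cut0 d u ->
  klimsup (dbar d) Send `<=` sendo d u.
Proof.
move=> He Hc [x t] [phi [p [hphi [hp hc]]]].
have eu : endo u (x, t).
  by apply: He; exists phi, p; split => //; split => // j; have [] := hp j.
have cu : cut0 d u x.
  apply: Hc; exists phi, (fun j => (p j).1); split => //; split; last exact: (mcvg_fst hc).
  by move=> j; have [_ []] := hp j.
by split => //; split => //; case: eu.
Qed.

Hypothesis usne : forall n, cut0 d (us n) !=set0.

Lemma B2 : endo u `<=` kliminf (dbar d) End -> cut0 d u `<=` kliminf d Cut ->
  sendo d u `<=` kliminf (dbar d) Send.
Proof.
move=> He Hc [x t] [[/= /andP [t0 t1] tu] [/= cx _]].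
move: t0; rewrite le_eqVlt => /orP [/eqP t0|tpos].
- subst t; have [y [hy hc]] := Hc x cx.
  exists (fun n => (y n, 0)); split; last exact: mcvg_pair0.
  move=> n; split; first by split => //=; rewrite ?lexx ?ler01 ?us0.
  by split => //=; [exact: hy | rewrite lexx ler01].
- have eu : endo u (x, t) by split => //=; rewrite (ltW tpos) t1.
  have [p [hp hc]] := He _ eu.
  have [N hN] := mcvg_snd hc tpos.
  have [w hw] := @choice nat X (fun n y => cut0 d (us n) y) usne.
  exists (fun n => if (N <= n)%N then p n else (w n, 0)); split.
  + move=> n; case: ifP => hn.
    * have [/andP [pj0 pj1] pju] := hp n.
      have pos := tpos_of (hN n hn).
      split; first by split => //; rewrite pj0 pj1.
      by split => //; [apply: pos_cut0; exact: lt_le_trans pju | rewrite pj0 pj1].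
    * split; first by split => //=; rewrite ?lexx ?ler01 ?us0.
      by split => /=; [exact: hw | rewrite ?lexx ?ler01].
  + move=> e e0; have [M hM] := hc e e0; exists (maxn N M) => n hn.
    rewrite (leq_trans (leq_maxl N M) hn); apply: hM.
    exact: leq_trans (leq_maxr N M) hn.
Qed.

End Met.

Theorem proposition4p2 (R : realType) (X : Type) (d : X -> X -> R)
  (u : X -> R) (us : nat -> X -> R) :
  is_metric d -> FUSC d u -> (forall n, FUSC d (us n)) ->
  ((fun n => hausdorff (dbar d) (sendo d (us n)) (sendo d u)) @ \oo --> 0%:E
    <->
   ((fun n => hausdorff (dbar d) (endo (us n)) (endo u)) @ \oo --> 0%:E /\
    (fun n => hausdorff d (cut0 d (us n)) (cut0 d u)) @ \oo --> 0%:E))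
  /\
  (kuratowski (dbar d) (fun n => sendo d (us n)) (sendo d u)
    <->
   (kuratowski (dbar d) (fun n => endo (us n)) (endo u) /\
    kuratowski d (fun n => cut0 d (us n)) (cut0 d u))).
Proof.
move=> md [u01 une ucl ucuts] hus.
have u0 : forall x, 0 <= u x by move=> x; have /andP[] := u01 x.
have us0 : forall n x, 0 <= us n x.
  by move=> n x; have [h _ _ _] := hus n; have /andP[] := h x.
have usne : forall n, cut0 d (us n) !=set0 by move=> n; have [_ h _ _] := hus n.
have db0 := dbar_ge0 md; have dd0 := d_ge0 md.
have Hs0 : forall n, (0 <= hausdorff (dbar d) (sendo d (us n)) (sendo d u))%E.
  move=> n; have [w hw] := usne n; apply: (@haus_ge0 _ _ _ _ _ (w, 0)) => //.
  split; first by split => //=; rewrite ?lexx ?ler01 ?us0.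
  by split => /=; [exact: hw | rewrite ?lexx ?ler01].
have He0 : forall n, (0 <= hausdorff (dbar d) (endo (us n)) (endo u))%E.
  move=> n; have [w hw] := usne n; apply: (@haus_ge0 _ _ _ _ _ (w, 0)) => //.
  by split => //=; rewrite ?lexx ?ler01 ?us0.
have Hc0 : forall n, (0 <= hausdorff d (cut0 d (us n)) (cut0 d u))%E.
  by move=> n; have [w hw] := usne n; apply: (@haus_ge0 _ _ _ _ _ w).
have cS := cvg0E Hs0; have cE := cvg0E He0; have cC := cvg0E Hc0.
split.
- split.
  + move/cS => H; split.
    * apply/cE => e e0.
      have e2 : 0 < e / 2 by rewrite divr_gt0.
      have := H _ e2; apply: filterS => n hn.
      have [h1 h2] := haus_lt (le_lt_trans hn (ltac:(rewrite lte_fin; lra) : ((e/2)%:E < e%:E)%E)).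
      by apply: haus_le; [exact: (exc_end md e0 u0 h1) | exact: (exc_end md e0 (us0 n) h2)].
    * apply/cC => e e0.
      have e2 : 0 < e / 2 by rewrite divr_gt0.
      have := H _ e2; apply: filterS => n hn.
      have [h1 h2] := haus_lt (le_lt_trans hn (ltac:(rewrite lte_fin; lra) : ((e/2)%:E < e%:E)%E)).
      by apply: haus_le; [exact: (exc_cut0 (us0 n) h1) | exact: (exc_cut0 u0 h2)].
  + move=> [/cE H1 /cC H2]; apply/cS => e e0.
    have e4 : 0 < e / 4 by rewrite divr_gt0.
    have e2 : 0 < e / 2 by rewrite divr_gt0.
    have ee : e / 2 + e / 2 = e by lra.
    have lt42 : ((e/4)%:E < (e/2)%:E)%E by rewrite lte_fin; lra.
    apply: filterS2 (H1 _ e4) (H2 _ e4) => n h1 h2.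
    have [a1 a2] := haus_lt (le_lt_trans h1 lt42).
    have [b1 b2] := haus_lt (le_lt_trans h2 lt42).
    apply: haus_le; rewrite -ee.
    * exact: (exc_send md e2 u0 a1 b1).
    * exact: (exc_send md e2 (us0 n) a2 b2).
- rewrite !kur_iff; split.
  + move=> [Hs Hi]; split; split.
    * exact: (F1 md u0 Hs).
    * exact: (F2 md us0 Hi).
    * exact: (F3 us0 Hs).
    * exact: (F4 u0 Hi).
  + move=> [[He1 He2] [Hc1 Hc2]]; split.
    * exact: (B1 He1 Hc1).
    * exact: (B2 md us0 usne He2 Hc2).
Qed.
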